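(* Let $P_1$ be the uniform distribution on $J_1=[0,\frac12]$, let $P_2$ be the uniform distribution on $J_2=[\frac34,1]$, and let $P=\frac34P_1+\frac14P_2$. For $n\ge 2$, let $\alpha_n$ be an optimal set of $n$-means for $P$. Then $\alpha_n\cap J_1\neq\emptyset$ and $\alpha_n\cap J_2\neq\emptyset$. Moreover, for $n\ge 2$, the Voronoi region (with respect to $\alpha_n$) of any point in $\alpha_n\cap J_1$ does not contain any point of $J_2$, and the Voronoi region of any point in $\alpha_n\cap J_2$ does not contain any point of $J_1$.
   Context: For a finite set $\alpha\subset\mathbb R$, $V(P;\alpha)=\int\min_{a\in\alpha}(x-a)^2\,dP(x)$; $V_n=\inf\{V(P;\alpha):\mathrm{card}(\alpha)\le n\}$; an optimal set of $n$-means is a set $\alpha$ with $\mathrm{card}(\alpha)\le n$ and $V(P;\alpha)=V_n$. The Voronoi region of $a\in\alpha$ is $\{x\in\mathbb R: |x-a|=\min_{b\in\alpha}|x-b|\}$. *)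

(* Defs.v *)
From Stdlib Require Import Reals Lra List.
From Coquelicot Require Import Coquelicot.
Open Scope R_scope.

Fixpoint mindist (a0 : R) (l : list R) (x : R) : R :=
  match l with
  | nil => (x - a0) ^ 2
  | b :: l' => Rmin ((x - a0) ^ 2) (mindist b l' x)
  end.

Definition sqdist (alpha : list R) (x : R) : R :=
  match alpha with
  | nil => 0 (* unused: the empty set is excluded *)
  | a :: l => mindist a l x
  end.

Definition unif_int (a b : R) (f : R -> R) : R := / (b - a) * RInt f a b.

Definition P_int (f : R -> R) : R :=
  3/4 * unif_int 0 (1/2) f + 1/4 * unif_int (3/4) 1 f.

Definition distortion (alpha : list R) : R := P_int (sqdist alpha).

(* admissible sets of at most n points (nonempty); card alpha <= length alpha *)
Definition admissible (n : nat) (alpha : list R) : Prop :=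
  alpha <> nil /\ (length alpha <= n)%nat.

Definition Vn (n : nat) : Rbar :=
  Glb_Rbar (fun v => exists alpha, admissible n alpha /\ v = distortion alpha).

Definition optimal_n_means (n : nat) (alpha : list R) : Prop :=
  admissible n alpha /\ NoDup alpha /\ Finite (distortion alpha) = Vn n.

Definition voronoi (alpha : list R) (a x : R) : Prop :=
  forall b, In b alpha -> Rabs (x - a) <= Rabs (x - b).

Definition J1 (x : R) : Prop := 0 <= x <= 1/2.
Definition J2 (x : R) : Prop := 3/4 <= x <= 1.

(* Main.v *)
Require Import Defs.
From Stdlib Require Import Reals Lra Psatz List Lia Classical.
From Coquelicot Require Import Coquelicot.
Open Scope R_scope.

Lemma I_formula (a b c : R) :
  RInt (fun y => (y - c)^2) a b = ((b - c)^3 - (a - c)^3) / 3.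
Proof.
  apply is_RInt_unique.
  replace (((b - c)^3 - (a - c)^3) / 3) with
    (minus ((fun y => (y - c)^3/3) b) ((fun y => (y - c)^3/3) a))
    by (unfold minus, plus, opp; simpl; field).
  apply (is_RInt_derive (fun y => (y - c)^3/3) (fun y => (y - c)^2)).
  - intros x _. auto_derive; [easy|]. unfold one, mult, zero, plus; simpl. field.
  - intros x _. apply (ex_derive_continuous (fun y => (y - c)^2)). auto_derive. easy.
Qed.

Lemma cont_poly2 (c x : R) : continuous (fun y => (y - c)^2) x.
Proof. apply (ex_derive_continuous (fun y => (y - c)^2)). auto_derive. easy. Qed.

Lemma Rmin_alt (u v : R) : Rmin u v = (u + v - Rabs (u - v)) / 2.
Proof.
  unfold Rmin. destruct (Rle_dec u v).
  - rewrite Rabs_left1; lra.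
  - rewrite Rabs_right; lra.
Qed.

Lemma cont_Rmin (f g : R -> R) x :
  continuous f x -> continuous g x -> continuous (fun y => Rmin (f y) (g y)) x.
Proof.
  intros Hf Hg.
  apply continuous_ext with (f := fun y => (f y + g y - Rabs (f y - g y)) / 2).
  { intros y. now rewrite Rmin_alt. }
  apply (continuous_mult (fun y => f y + g y - Rabs (f y - g y)) (fun _ => / 2)); [|apply continuous_const].
  apply (continuous_minus (fun y => f y + g y) (fun y => Rabs (f y - g y))).
  - now apply (continuous_plus f g).
  - apply continuous_Rabs_comp. now apply (continuous_minus f g).
Qed.

Lemma cont_mindist (l : list R) : forall a0 x, continuous (mindist a0 l) x.
Proof.
  induction l as [|b l IH]; intros a0 x; simpl.
  - apply cont_poly2.
  - apply cont_Rmin; [apply cont_poly2| apply IH].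
Qed.

Lemma cont_sqdist (alpha : list R) x : continuous (sqdist alpha) x.
Proof.
  destruct alpha as [|a l]; simpl.
  - apply continuous_const.
  - apply cont_mindist.
Qed.

Lemma mindist_le (l : list R) : forall a0 b y, In b (a0 :: l) -> mindist a0 l y <= (y - b)^2.
Proof.
  induction l as [|c l IH]; intros a0 b y Hb; simpl in *.
  - destruct Hb as [<-|[]]. lra.
  - destruct Hb as [<-|Hb].
    + apply Rmin_l.
    + eapply Rle_trans; [apply Rmin_r|]. now apply IH.
Qed.

Lemma mindist_att (l : list R) : forall a0 y, exists b, In b (a0 :: l) /\ mindist a0 l y = (y - b)^2.
Proof.
  induction l as [|c l IH]; intros a0 y; simpl.
  - exists a0. auto.
  - destruct (IH c y) as [b [Hb Heq]].
    unfold Rmin. destruct (Rle_dec _ _).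
    + exists a0. auto.
    + exists b. split; [right; exact Hb| exact Heq].
Qed.

Lemma sqdist_le alpha b y : In b alpha -> sqdist alpha y <= (y - b)^2.
Proof.
  destruct alpha as [|a l]; [intros []|]. apply mindist_le.
Qed.

Lemma sqdist_att alpha y : alpha <> nil -> exists b, In b alpha /\ sqdist alpha y = (y - b)^2.
Proof.
  destruct alpha as [|a l]; [easy|]. intros _. apply mindist_att.
Qed.

Lemma sqdist_ge alpha y h : alpha <> nil -> (forall b, In b alpha -> h <= (y - b)^2) -> h <= sqdist alpha y.
Proof.
  intros Hn H. destruct (sqdist_att alpha y Hn) as [b [Hb ->]]. auto.
Qed.

Lemma sqdist_gt alpha y h : alpha <> nil -> (forall b, In b alpha -> h < (y - b)^2) -> h < sqdist alpha y.
Proof.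
  intros Hn H. destruct (sqdist_att alpha y Hn) as [b [Hb ->]]. auto.
Qed.

Lemma Dform alpha : distortion alpha = 3/2 * RInt (sqdist alpha) 0 (1/2) + RInt (sqdist alpha) (3/4) 1.
Proof.
  unfold distortion, P_int, unif_int.
  replace (/ (1/2 - 0)) with 2 by field. replace (/ (1 - 3/4)) with 4 by field.
  assert (H : forall u v : R, 3/4*(2*u)+1/4*(4*v) = 3/2*u+v) by (intros; field). apply H.
Qed.

Section Int.
Variable f : R -> R.
Hypothesis fc : forall x, continuous f x.

Lemma exf a b : ex_RInt f a b.
Proof. apply (@ex_RInt_continuous R_CompleteNormedModule f a b). intros; apply fc. Qed.

Lemma LB a b c : a <= b -> (forall y, a < y < b -> (y - c)^2 <= f y) ->
  ((b - c)^3 - (a - c)^3) / 3 <= RInt f a b.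
Proof.
  intros Hab H. rewrite <- I_formula. apply RInt_le; auto.
  - apply (@ex_RInt_continuous R_CompleteNormedModule (fun y => (y - c)^2) a b). intros; apply cont_poly2.
  - apply exf.
Qed.

Lemma UB a b c : a <= b -> (forall y, a < y < b -> f y <= (y - c)^2) ->
  RInt f a b <= ((b - c)^3 - (a - c)^3) / 3.
Proof.
  intros Hab H. rewrite <- I_formula. apply RInt_le; auto.
  - apply exf.
  - apply (@ex_RInt_continuous R_CompleteNormedModule (fun y => (y - c)^2) a b). intros; apply cont_poly2.
Qed.

Lemma LBs a b c : a < b -> (forall y, a < y < b -> (y - c)^2 < f y) ->
  ((b - c)^3 - (a - c)^3) / 3 < RInt f a b.
Proof.
  intros Hab H. rewrite <- I_formula. apply RInt_lt; auto.
  intros; apply cont_poly2.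
Qed.

Lemma Ch a b c : RInt f a c = RInt f a b + RInt f b c.
Proof.
  rewrite <- (RInt_Chasles f a b c); [reflexivity| apply exf| apply exf].
Qed.

Lemma Ipos a b : a <= b -> (forall y, a < y < b -> 0 <= f y) -> 0 <= RInt f a b.
Proof. intros. apply RInt_ge_0; auto. apply exf. Qed.
End Int.

Lemma opt_le n alpha beta : optimal_n_means n alpha -> admissible n beta ->
  distortion alpha <= distortion beta.
Proof.
  intros [_ [_ Heq]] Hb.
  assert (H := Glb_Rbar_correct (fun v => exists alpha, admissible n alpha /\ v = distortion alpha)).
  destruct H as [H _].
  assert (Hl := H (distortion beta) (ex_intro _ beta (conj Hb eq_refl))).
  unfold Vn in Heq. rewrite <- Heq in Hl. exact Hl.
Qed.

Definition repl (r s : R) (l : list R) : list R :=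
  map (fun b => if Req_EM_T b r then s else b) l.

Lemma repl_len r s l : length (repl r s l) = length l.
Proof. apply length_map. Qed.

Lemma repl_in_s r s l : In r l -> In s (repl r s l).
Proof.
  intros H. unfold repl.
  apply in_map with (f := fun b => if Req_EM_T b r then s else b) in H.
  destruct (Req_EM_T r r); [exact H|congruence].
Qed.

Lemma repl_in_other r s l b : In b l -> b <> r -> In b (repl r s l).
Proof.
  intros H Hb. unfold repl.
  apply in_map with (f := fun b => if Req_EM_T b r then s else b) in H.
  destruct (Req_EM_T b r); [congruence|exact H].
Qed.

Lemma repl_nil r s l : l <> nil -> repl r s l <> nil.
Proof. destruct l; simpl; congruence. Qed.

Lemma repl_adm n r s l : admissible n l -> admissible n (repl r s l).
Proof.
  intros [H1 H2]. split; [now apply repl_nil| now rewrite repl_len].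
Qed.

Lemma repl_le alpha r s y c : alpha <> nil -> In c (repl r s alpha) -> (y - c)^2 <= (y - r)^2 ->
  sqdist (repl r s alpha) y <= sqdist alpha y.
Proof.
  intros Hn Hc Hcr. destruct (sqdist_att alpha y Hn) as [b [Hb ->]].
  destruct (Req_EM_T b r) as [->|Hbr].
  - eapply Rle_trans; [apply sqdist_le; exact Hc| exact Hcr].
  - apply sqdist_le. now apply repl_in_other.
Qed.

Lemma U3 n alpha : (3 <= n)%nat -> optimal_n_means n alpha -> distortion alpha <= 1/192.
Proof.
  intros Hn Hopt.
  set (beta := 1/8 :: 3/8 :: 7/8 :: nil).
  assert (Hb : admissible n beta) by (split; [discriminate| simpl; lia]).
  eapply Rle_trans; [apply (opt_le n alpha beta Hopt Hb)|].
  rewrite Dform. rewrite (Ch _ (cont_sqdist beta) 0 (1/4) (1/2)).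
  assert (H1 := UB _ (cont_sqdist beta) 0 (1/4) (1/8) ltac:(lra)
    (fun y _ => sqdist_le beta (1/8) y ltac:(simpl; auto))).
  assert (H2 := UB _ (cont_sqdist beta) (1/4) (1/2) (3/8) ltac:(lra)
    (fun y _ => sqdist_le beta (3/8) y ltac:(simpl; auto))).
  assert (H3 := UB _ (cont_sqdist beta) (3/4) 1 (7/8) ltac:(lra)
    (fun y _ => sqdist_le beta (7/8) y ltac:(simpl; auto))).
  lra.
Qed.

Lemma U2 n alpha : (2 <= n)%nat -> optimal_n_means n alpha -> distortion alpha <= 13/768.
Proof.
  intros Hn Hopt.
  set (beta := 1/4 :: 7/8 :: nil).
  assert (Hb : admissible n beta) by (split; [discriminate| simpl; lia]).
  eapply Rle_trans; [apply (opt_le n alpha beta Hopt Hb)|].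
  rewrite Dform.
  assert (H1 := UB _ (cont_sqdist beta) 0 (1/2) (1/4) ltac:(lra)
    (fun y _ => sqdist_le beta (1/4) y ltac:(simpl; auto))).
  assert (H3 := UB _ (cont_sqdist beta) (3/4) 1 (7/8) ltac:(lra)
    (fun y _ => sqdist_le beta (7/8) y ltac:(simpl; auto))).
  lra.
Qed.

Lemma K_nonneg alpha a b : a <= b -> 0 <= RInt (sqdist alpha) a b.
Proof.
  intros H. apply (Ipos (sqdist alpha) (cont_sqdist alpha)); [exact H|].
  intros y _. destruct alpha as [|c l]; [simpl; apply Rle_refl|].
  destruct (sqdist_att (c :: l) y ltac:(discriminate)) as [b' [_ ->]]. apply pow2_ge_0.
Qed.

Section Big.
Variable n : nat.
Variable alpha : list R.
Hypothesis Hn : (3 <= n)%nat.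
Hypothesis Hopt : optimal_n_means n alpha.

Let Hnil : alpha <> nil.
Proof. destruct Hopt as [[H _] _]. exact H. Qed.
Let Hadm : admissible n alpha.
Proof. destruct Hopt as [H _]. exact H. Qed.
Let HV := U3 n alpha Hn Hopt.

Lemma bigA : exists a, In a alpha /\ J1 a.
Proof.
  destruct (classic (exists a, In a alpha /\ J1 a)) as [H|H]; [exact H|exfalso].
  assert (Hno : forall b, In b alpha -> b < 0 \/ 1/2 < b).
  { intros b Hb. destruct (Rlt_or_le b 0); [now left|].
    destruct (Rlt_or_le (1/2) b); [now right|]. exfalso. apply H. exists b. split; auto. split; auto. }
  assert (HD := HV). rewrite Dform in HD.
  assert (K2 := K_nonneg alpha (3/4) 1 ltac:(lra)).
  rewrite (Ch _ (cont_sqdist alpha) 0 (1/4) (1/2)) in HD.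
  assert (H1 : ((1/4 - 0)^3 - (0 - 0)^3)/3 <= RInt (sqdist alpha) 0 (1/4)).
  { apply (LB _ (cont_sqdist alpha)); [lra|]. intros y Hy. apply sqdist_ge; [exact Hnil|].
    intros b Hb. destruct (Hno b Hb); nra. }
  assert (H2 : ((1/2 - 1/2)^3 - (1/4 - 1/2)^3)/3 <= RInt (sqdist alpha) (1/4) (1/2)).
  { apply (LB _ (cont_sqdist alpha)); [lra|]. intros y Hy. apply sqdist_ge; [exact Hnil|].
    intros b Hb. destruct (Hno b Hb); nra. }
  lra.
Qed.
End Big.

Lemma RI_le f g a b : (forall x, continuous f x) -> (forall x, continuous g x) -> a <= b ->
  (forall y, a < y < b -> f y <= g y) -> RInt f a b <= RInt g a b.
Proof.
  intros fc gc Hab H. apply RInt_le; auto; [apply (exf f fc)| apply (exf g gc)].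
Qed.

Lemma Rabs_cases x : (0 <= x /\ Rabs x = x) \/ (x < 0 /\ Rabs x = - x).
Proof. unfold Rabs. destruct (Rcase_abs x); [right|left]; split; lra. Qed.

Section Big2.
Variable n : nat.
Variable alpha : list R.
Hypothesis Hn : (3 <= n)%nat.
Hypothesis Hopt : optimal_n_means n alpha.

Let Hnil : alpha <> nil.
Proof. destruct Hopt as [[H _] _]. exact H. Qed.
Let Hadm : admissible n alpha.
Proof. destruct Hopt as [H _]. exact H. Qed.
Let HV := U3 n alpha Hn Hopt.

Lemma bigB : exists a, In a alpha /\ J2 a.
Proof.
  destruct (classic (exists a, In a alpha /\ J2 a)) as [H|H]; [exact H|exfalso].
  assert (Hno : forall b, In b alpha -> b < 3/4 \/ 1 < b).
  { intros b Hb. destruct (Rlt_or_le b (3/4)); [now left|].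
    destruct (Rlt_or_le 1 b); [now right|]. exfalso. apply H. exists b. split; auto. split; auto. }
  assert (K2s : 1/768 < RInt (sqdist alpha) (3/4) 1).
  { rewrite (Ch _ (cont_sqdist alpha) (3/4) (7/8) 1).
    assert (H1 : ((7/8 - 3/4)^3 - (3/4 - 3/4)^3)/3 < RInt (sqdist alpha) (3/4) (7/8)).
    { apply (LBs _ (cont_sqdist alpha)); [lra|]. intros y Hy. apply sqdist_gt; [exact Hnil|].
      intros b Hb. destruct (Hno b Hb); nra. }
    assert (H2 : ((1 - 1)^3 - (7/8 - 1)^3)/3 < RInt (sqdist alpha) (7/8) 1).
    { apply (LBs _ (cont_sqdist alpha)); [lra|]. intros y Hy. apply sqdist_gt; [exact Hnil|].
      intros b Hb. destruct (Hno b Hb); nra. }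
    lra. }
  destruct (classic (exists q, In q alpha /\ 1 < q)) as [[q [Hq Hq1]]|Hq].
  - set (alpha' := repl q (7/8) alpha).
    assert (Hle := opt_le n alpha alpha' Hopt (repl_adm n q (7/8) alpha Hadm)).
    rewrite !Dform in Hle.
    assert (K1 : RInt (sqdist alpha') 0 (1/2) <= RInt (sqdist alpha) 0 (1/2)).
    { apply RI_le; [apply cont_sqdist| apply cont_sqdist| lra|].
      intros y Hy. apply (repl_le alpha q (7/8) y (7/8) Hnil); [now apply repl_in_s| nra]. }
    assert (K2 : RInt (sqdist alpha') (3/4) 1 <= ((1 - 7/8)^3 - (3/4 - 7/8)^3)/3).
    { apply (UB _ (cont_sqdist alpha')); [lra|]. intros y Hy. apply sqdist_le. now apply repl_in_s. }
    lra.
  - assert (Hlt : forall b, In b alpha -> b < 3/4).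
    { intros b Hb. destruct (Hno b Hb) as [h|h]; [exact h|]. exfalso. apply Hq. exists b. auto. }
    assert (K2 : ((1 - 3/4)^3 - (3/4 - 3/4)^3)/3 < RInt (sqdist alpha) (3/4) 1).
    { apply (LBs _ (cont_sqdist alpha)); [lra|]. intros y Hy. apply sqdist_gt; [exact Hnil|].
      intros b Hb. specialize (Hlt b Hb). nra. }
    assert (K1 := K_nonneg alpha 0 (1/2) ltac:(lra)).
    assert (HD := HV). rewrite Dform in HD. lra.
Qed.

Lemma bigC : forall a, In a alpha -> J1 a -> forall x, J2 x -> ~ voronoi alpha a x.
Proof.
  intros a Ha [Ha0 Ha1] x [Hx0 Hx1] Hvor.
  assert (Hgap : forall b, In b alpha -> b <= 1/2 \/ 1 <= b).
  { intros b Hb. specialize (Hvor b Hb).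
    destruct (Rle_or_lt b (1/2)); [now left|]. destruct (Rle_or_lt 1 b); [now right|]. exfalso.
    destruct (Rabs_cases (x - a)) as [[? E1]|[? E1]]; destruct (Rabs_cases (x - b)) as [[? E2]|[? E2]];
      rewrite E1, E2 in Hvor; lra. }
  destruct bigB as [b0 [Hb0 [Hb00 Hb01]]].
  assert (E : b0 = 1) by (destruct (Hgap b0 Hb0); lra). subst b0.
  set (alpha' := repl 1 (7/8) alpha).
  assert (Hle := opt_le n alpha alpha' Hopt (repl_adm n 1 (7/8) alpha Hadm)).
  rewrite !Dform in Hle.
  assert (K1 : RInt (sqdist alpha') 0 (1/2) <= RInt (sqdist alpha) 0 (1/2)).
  { apply RI_le; [apply cont_sqdist| apply cont_sqdist| lra|].
    intros y Hy. apply (repl_le alpha 1 (7/8) y a Hnil); [apply repl_in_other; [exact Ha| lra]| nra]. }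
  assert (K2 : RInt (sqdist alpha') (3/4) 1 <= ((1 - 7/8)^3 - (3/4 - 7/8)^3)/3).
  { apply (UB _ (cont_sqdist alpha')); [lra|]. intros y Hy. apply sqdist_le. now apply repl_in_s. }
  assert (K2' : ((1 - 1)^3 - (3/4 - 1)^3)/3 <= RInt (sqdist alpha) (3/4) 1).
  { apply (LB _ (cont_sqdist alpha)); [lra|]. intros y Hy. apply sqdist_ge; [exact Hnil|].
    intros b Hb. destruct (Hgap b Hb); nra. }
  lra.
Qed.

Lemma bigD : forall a, In a alpha -> J2 a -> forall x, J1 x -> ~ voronoi alpha a x.
Proof.
  intros a Ha [Ha0 Ha1] x [Hx0 Hx1] Hvor.
  assert (Hgap : forall b, In b alpha -> b <= 1/4 \/ 3/4 <= b).
  { intros b Hb. specialize (Hvor b Hb).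
    destruct (Rle_or_lt b (1/4)); [now left|]. destruct (Rle_or_lt (3/4) b); [now right|]. exfalso.
    destruct (Rabs_cases (x - a)) as [[? E1]|[? E1]]; destruct (Rabs_cases (x - b)) as [[? E2]|[? E2]];
      rewrite E1, E2 in Hvor; lra. }
  assert (HD := HV). rewrite Dform in HD.
  rewrite (Ch _ (cont_sqdist alpha) 0 (1/4) (1/2)) in HD.
  assert (K0 := K_nonneg alpha 0 (1/4) ltac:(lra)).
  assert (K2 := K_nonneg alpha (3/4) 1 ltac:(lra)).
  assert (K1 : ((1/2 - 1/4)^3 - (1/4 - 1/4)^3)/3 <= RInt (sqdist alpha) (1/4) (1/2)).
  { apply (LB _ (cont_sqdist alpha)); [lra|]. intros y Hy. apply sqdist_ge; [exact Hnil|].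
    intros b Hb. destruct (Hgap b Hb); nra. }
  lra.
Qed.
End Big2.
Lemma polyA q : 13/768 < 3/2*(((1/2-q)^3 - (0-q)^3)/3) + ((1-q)^3-(3/4-q)^3)/3.
Proof. assert (H:=pow2_ge_0 (q-13/32)). lra. Qed.
Lemma polyE p : 13/768 < 3/2*(((1/2-p)^3 - (0-p)^3)/3) + ((1-p)^3-(3/4-p)^3)/3.
Proof. assert (H:=pow2_ge_0 (p-13/32)). lra. Qed.
Lemma polyB m d : 0 <= m <= 1/2 -> 0 <= d ->
 13/768 < 3/2*(((m-(m-d))^3 - (0-(m-d))^3)/3 + ((1/2-(m+d))^3 - (m-(m+d))^3)/3) + ((1-(m+d))^3-(3/4-(m+d))^3)/3.
Proof.
  intros Hm Hd.
  assert (H0 := pow2_ge_0 (m+d-13/32-3*m^2/2)).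
  set (s := 1/2 - m).
  assert (H1 : 0 <= s*(1-s)) by (apply Rmult_le_pos; unfold s; lra).
  assert (H2 : 0 <= s^3*(1-3/2*s)) by (apply Rmult_le_pos; [apply pow_le; unfold s; lra| unfold s; lra]).
  replace m with (1/2 - s) in * by (unfold s; ring).
  lra.
Qed.
Lemma polyD m d : 3/4 <= m <= 1 -> 0 <= d ->
 13/768 < 3/2*(((1/2-(m-d))^3 - (0-(m-d))^3)/3) + (((m-(m-d))^3 - (3/4-(m-d))^3)/3 + ((1-(m+d))^3 - (m-(m+d))^3)/3).
Proof.
  intros Hm Hd.
  assert (H0 := pow2_ge_0 (m+d-13/32-(3/16+m^2))).
  set (s := m - 3/4).
  assert (H1 : 0 <= s*(1/4-s)) by (apply Rmult_le_pos; unfold s; lra).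
  assert (H2 : 0 <= s^2*(1/4-s)) by (apply Rmult_le_pos; [apply pow_le; unfold s; lra| unfold s; lra]).
  assert (H3 : 0 <= s^3*(1/4-s)) by (apply Rmult_le_pos; [apply pow_le; unfold s; lra| unfold s; lra]).
  assert (H4 : 0 <= s) by (unfold s; lra).
  replace m with (3/4 + s) in * by (unfold s; ring).
  lra.
Qed.

Lemma sq0 x : x^2 = 0 -> x = 0.
Proof. intros H. destruct (Req_dec x 0) as [h|h]; [exact h|]. exfalso. exact (pow_nonzero x 2 h H). Qed.

Lemma n2_char f p q : (forall x, continuous f x) -> p <= q ->
  (forall y, f y = Rmin ((y-p)^2) ((y-q)^2)) ->
  3/2 * RInt f 0 (1/2) + RInt f (3/4) 1 <= 13/768 -> p = 1/4 /\ q = 7/8.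
Proof.
  intros fc Hpq Hf HD.
  set (m := (p+q)/2).
  assert (HL : forall y, y <= m -> (y-p)^2 <= f y).
  { intros y Hy. rewrite Hf. rewrite Rmin_left; [lra|].
    assert (0 <= (q-p)*(p+q-2*y)) by (apply Rmult_le_pos; unfold m in Hy; lra). nra. }
  assert (HR : forall y, m <= y -> (y-q)^2 <= f y).
  { intros y Hy. rewrite Hf. rewrite Rmin_right; [lra|].
    assert (0 <= (q-p)*(2*y-p-q)) by (apply Rmult_le_pos; unfold m in Hy; lra). nra. }
  set (d := (q-p)/2).
  assert (Ep : p = m - d) by (unfold m, d; field).
  assert (Eq : q = m + d) by (unfold m, d; field).
  assert (Hd : 0 <= d) by (unfold d; lra).
  destruct (Rle_or_lt m 0) as [Ha|Ha].
  { exfalso.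
    assert (K1 := LB f fc 0 (1/2) q ltac:(lra) (fun y Hy => HR y ltac:(lra))).
    assert (K2 := LB f fc (3/4) 1 q ltac:(lra) (fun y Hy => HR y ltac:(lra))).
    assert (P := polyA q). lra. }
  destruct (Rle_or_lt m (1/2)) as [Hb|Hb].
  { exfalso. rewrite (Ch f fc 0 m (1/2)) in HD.
    assert (K1 := LB f fc 0 m p ltac:(lra) (fun y Hy => HL y ltac:(lra))).
    assert (K1' := LB f fc m (1/2) q ltac:(lra) (fun y Hy => HR y ltac:(lra))).
    assert (K2 := LB f fc (3/4) 1 q ltac:(lra) (fun y Hy => HR y ltac:(lra))).
    assert (P := polyB m d ltac:(lra) Hd). rewrite <- Ep, <- Eq in P. lra. }
  destruct (Rle_or_lt m (3/4)) as [Hc|Hc].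
  { assert (K1 := LB f fc 0 (1/2) p ltac:(lra) (fun y Hy => HL y ltac:(lra))).
    assert (K2 := LB f fc (3/4) 1 q ltac:(lra) (fun y Hy => HR y ltac:(lra))).
    assert (S1 := pow2_ge_0 (p - 1/4)). assert (S2 := pow2_ge_0 (q - 7/8)).
    assert (Z1 : (p - 1/4)^2 = 0) by lra. assert (Z2 : (q - 7/8)^2 = 0) by lra.
    apply sq0 in Z1. apply sq0 in Z2. split; lra. }
  destruct (Rle_or_lt m 1) as [Hdd|He].
  { exfalso. rewrite (Ch f fc (3/4) m 1) in HD.
    assert (K1 := LB f fc 0 (1/2) p ltac:(lra) (fun y Hy => HL y ltac:(lra))).
    assert (K2 := LB f fc (3/4) m p ltac:(lra) (fun y Hy => HL y ltac:(lra))).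
    assert (K2' := LB f fc m 1 q ltac:(lra) (fun y Hy => HR y ltac:(lra))).
    assert (P := polyD m d ltac:(lra) Hd). rewrite <- Ep, <- Eq in P. lra. }
  exfalso.
  assert (K1 := LB f fc 0 (1/2) p ltac:(lra) (fun y Hy => HL y ltac:(lra))).
  assert (K2 := LB f fc (3/4) 1 p ltac:(lra) (fun y Hy => HL y ltac:(lra))).
  assert (P := polyE p). lra.
Qed.

Lemma two_shape (alpha : list R) : alpha <> nil -> (length alpha <= 2)%nat ->
  exists p q, p <= q /\ (forall b, In b alpha <-> b = p \/ b = q) /\
    (forall y, sqdist alpha y = Rmin ((y-p)^2) ((y-q)^2)).
Proof.
  intros Hn Hl.
  destruct alpha as [|a [|b [|c l]]]; [easy| | |simpl in Hl; lia].
  - exists a, a. split; [lra|]. split.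
    + intros x. simpl. split; [intros [h|[]]; left; auto| intros [h|h]; left; auto].
    + intros y. simpl. rewrite Rmin_left; [reflexivity| apply Rle_refl].
  - destruct (Rle_or_lt a b) as [h|h].
    + exists a, b. split; [exact h|]. split.
      * intros x. simpl. split; [intros [e|[e|[]]]; auto| intros [e|e]; auto].
      * intros y. reflexivity.
    + exists b, a. split; [lra|]. split.
      * intros x. simpl. split; [intros [e|[e|[]]]; auto| intros [e|e]; auto].
      * intros y. simpl. apply Rmin_comm.
Qed.

Theorem proposition3p7 :
  forall (n : nat) (alpha : list R),
    (2 <= n)%nat -> optimal_n_means n alpha ->
    (exists a, In a alpha /\ J1 a) /\
    (exists a, In a alpha /\ J2 a) /\
    (forall a, In a alpha -> J1 a -> forall x, J2 x -> ~ voronoi alpha a x) /\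
    (forall a, In a alpha -> J2 a -> forall x, J1 x -> ~ voronoi alpha a x).
Proof.
  intros n alpha Hn Hopt.
  destruct (Nat.eq_dec n 2) as [E|E].
  - subst n.
    assert (HV := U2 2 alpha Hn Hopt). rewrite Dform in HV.
    destruct Hopt as [[Hnil Hlen] _].
    destruct (two_shape alpha Hnil Hlen) as [p [q [Hpq [Hin Hsq]]]].
    destruct (n2_char (sqdist alpha) p q (cont_sqdist alpha) Hpq Hsq HV) as [-> ->].
    assert (I1 : In (1/4) alpha) by (apply Hin; auto).
    assert (I2 : In (7/8) alpha) by (apply Hin; auto).
    split; [exists (1/4); split; [exact I1| unfold J1; lra]|].
    split; [exists (7/8); split; [exact I2| unfold J2; lra]|].
    split.
    + intros a Ha [Ha0 Ha1] x [Hx0 Hx1] Hvor.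
      apply Hin in Ha. destruct Ha as [->| ->]; [|lra].
      specialize (Hvor (7/8) I2).
      destruct (Rabs_cases (x - 1/4)) as [[? E1]|[? E1]]; destruct (Rabs_cases (x - 7/8)) as [[? E2]|[? E2]];
        rewrite E1, E2 in Hvor; lra.
    + intros a Ha [Ha0 Ha1] x [Hx0 Hx1] Hvor.
      apply Hin in Ha. destruct Ha as [->| ->]; [lra|].
      specialize (Hvor (1/4) I1).
      destruct (Rabs_cases (x - 7/8)) as [[? E1]|[? E1]]; destruct (Rabs_cases (x - 1/4)) as [[? E2]|[? E2]];
        rewrite E1, E2 in Hvor; lra.
  - assert (H3 : (3 <= n)%nat) by lia.
    split; [exact (bigA n alpha H3 Hopt)|].
    split; [exact (bigB n alpha H3 Hopt)|].
    split; [exact (bigC n alpha H3 Hopt)| exact (bigD n alpha H3 Hopt)].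
Qed.
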